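(* Let $q\ge 1$ and $s\ge 0$ be integers and assume that the polynomials $L_0,\dots,L_q$ defined in the context are linearly independent. For $k=0,\dots,q$ and $m=0,\dots,2^s-1$ define $$e_{k,m}(z) = \frac{1}{\sqrt{(2k+1)2^s}}\, r_q^m(z2^{-s})\, D_q^{-1}(z2^{-s})\, L_k(z2^{-s}), \qquad \tilde e_{k,m}(z) = D_q^{2^s}(z2^{-s})\, e_{k,m}(z),$$ and $\Pi^m = \{\tilde e_{0,m},\tilde e_{1,m},\dots,\tilde e_{q,m}\}$. Then for each $m = 0,1,\dots,2^s-1$, the functions in $\Pi^m$ are linearly independent.
   Context: $N_q(z) = \sum_{j=0}^q \frac{(2q-j)!\,q!}{(2q)!\,j!\,(q-j)!} z^j$, $D_q(z) = N_q(-z)$, $r_q = N_q/D_q$ (diagonal Padé approximant of $e^z$). For scalar $z$ (not a zero of $D_q$), let $C_0(z),\dots,C_q(z)$ be the solution of the linear system, with $\tilde C_k = C_k/(2k+1)$, $\tilde C_{q+1}=0$: $\sum_{k=0}^q(-1)^k(2k+1)\tilde C_k = 1$ and, for $j=1,\dots,q$, $-z\tilde C_{j-1} + (4j+2)\tilde C_j + z\tilde C_{j+1} = 0$. These are rational functions of the form $C_k(z) = L_k(z)/D_q(z)$ with $L_k$ polynomials of degree at most $q$, and $\sum_k C_k(z) = r_q(z)$. (These are the coefficients of the Legendre–Petrov–Galerkin expansion $\sum_k C_k P_k(t)\approx e^{zt}$ on $[0,1]$.) *)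

(* Defs.v *)
(* Scalars live in an arbitrary numClosedFieldType C
   (e.g. algC, or complex numbers R[i]); the paper's setting is C = complex. *)
From HB Require Import structures.
From mathcomp Require Import all_boot all_order all_algebra.
Set Implicit Arguments. Unset Strict Implicit. Unset Printing Implicit Defensive.
Import Order.TTheory GRing.Theory Num.Theory.
Local Open Scope ring_scope.

Section Pade.
Variable C : numClosedFieldType.

Definition pade_coef (q j : nat) : C :=
  (((2 * q - j)`! * q`!)%:R) / (((2 * q)`! * j`! * (q - j)`!)%:R).

Definition Nq (q : nat) : {poly C} := \poly_(j < q.+1) pade_coef q j.

Definition Dq_at (q : nat) (z : C) : C := (Nq q).[- z].

Definition rq_at (q : nat) (z : C) : C := (Nq q).[z] / Dq_at q z.

Definition Ctilde (q : nat) (L : nat -> {poly C}) (z : C) (k : nat) : C :=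
  if (k <= q)%N then ((L k).[z] / Dq_at q z) / (2 * k + 1)%:R else 0.

(* (C_0,...,C_q) = (L_0/D_q, ..., L_q/D_q) solves the linear system of the context
   at the point z *)
Definition solves_system (q : nat) (L : nat -> {poly C}) (z : C) : Prop :=
  (\sum_(k < q.+1) (-1) ^+ k * (2 * k + 1)%:R * Ctilde q L z k = 1) /\
  (forall j : nat, (1 <= j <= q)%N ->
     - z * Ctilde q L z j.-1 + (4 * j + 2)%:R * Ctilde q L z j
       + z * Ctilde q L z j.+1 = 0).

Definition polys_lin_indep (q : nat) (L : nat -> {poly C}) : Prop :=
  forall a : nat -> C, \sum_(k < q.+1) a k *: L k = 0 ->
    forall k : nat, (k <= q)%N -> a k = 0.

Definition e_km (q s : nat) (L : nat -> {poly C}) (k m : nat) (z : C) : C :=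
  let w := z / (2 ^+ s) in
  (sqrtC (((2 * k + 1) * 2 ^ s)%N%:R))^-1 * rq_at q w ^+ m
    * (Dq_at q w)^-1 * (L k).[w].

Definition et_km (q s : nat) (L : nat -> {poly C}) (k m : nat) (z : C) : C :=
  Dq_at q (z / (2 ^+ s)) ^+ (2 ^ s) * e_km q s L k m z.

(* linear independence of the functions Pi^m = {e~_{0,m},...,e~_{q,m}}, as functions
   on their natural domain {z | D_q(z 2^-s) <> 0} *)
Definition Pi_lin_indep (q s : nat) (L : nat -> {poly C}) (m : nat) : Prop :=
  forall a : nat -> C,
    (forall z : C, Dq_at q (z / (2 ^+ s)) != 0 ->
       \sum_(k < q.+1) a k * et_km q s L k m z = 0) ->
    forall k : nat, (k <= q)%N -> a k = 0.

End Pade.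

(* Main.v *)
Require Import Defs.
From HB Require Import structures.
From mathcomp Require Import all_boot all_order all_algebra.
From mathcomp Require Import ring.
Import Order.TTheory GRing.Theory Num.Theory.
Local Open Scope ring_scope.

Lemma poly_all_zero (C : numClosedFieldType) (p : {poly C}) :
  (forall w, p.[w] = 0) -> p = 0.
Proof.
move=> H; apply: (@roots_geq_poly_eq0 _ p [seq i%:R | i <- iota 0 (size p)]).
- by apply/allP => x /mapP [i _ ->]; apply/eqP; rewrite H.
- rewrite map_inj_uniq ?iota_uniq //; exact: (mulrIn (oner_neq0 C)).
- by rewrite size_map size_iota.
Qed.

Lemma aux_pow (C : numClosedFieldType) (d n : C) (a m : nat) : d != 0 ->
  d ^+ (a + m + 1) * ((n / d) ^+ m * d^-1) = n ^+ m * d ^+ a.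
Proof.
move=> dn0; rewrite expr_div_n !exprD expr1.
have hm : d ^+ m != 0 by rewrite expf_neq0.
field; by rewrite hm dn0.
Qed.

Theorem lemma3 (C : numClosedFieldType) (q s : nat) (L : nat -> {poly C}) :
  (1 <= q)%N ->
  (forall z : C, Dq_at q z != 0 -> solves_system q L z) ->
  polys_lin_indep q L ->
  forall m : nat, (m < 2 ^ s)%N -> Pi_lin_indep q s L m.
Proof.
move=> _ _ Hind m Hm a Ha.
set c := fun k : nat => (sqrtC (((2 * k + 1) * 2 ^ s)%N%:R : C))^-1.
have cn0 : forall k, c k != 0.
  move=> k; rewrite /c invr_eq0 sqrtC_eq0 pnatr_eq0 muln_eq0 negb_or.
  by rewrite addn1 /= expn_eq0.
set N := Nq C q.
set Dp := N \Po (- 'X).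
have HD : forall w, Dq_at q w = Dp.[w].
  by move=> w; rewrite /Dq_at /Dp horner_comp hornerN hornerX.
have N0 : N.[0] = 1.
  rewrite horner_coef0 /N /Nq coef_poly /= /pade_coef subn0 fact0 muln1.
  by rewrite subn0 divff // pnatr_eq0 muln_eq0 negb_or -!lt0n !fact_gt0 //.
have Nn0 : N != 0.
  by apply/eqP => h; move: N0; rewrite h horner0 => /eqP; rewrite eq_sym oner_eq0.
have Dn0 : Dp != 0.
  apply/eqP => h; have := HD 0; rewrite h horner0 /Dq_at oppr0 -/N N0 => /eqP.
  by rewrite oner_eq0.
set A := (2 ^ s - m.+1)%N.
set S := \sum_(k < q.+1) (a k * c k) *: L k.
set P := S * N ^+ m * Dp ^+ A.
have tw : (2 ^+ s : C) != 0 by rewrite expf_neq0 // pnatr_eq0.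
have HP : forall w, Dp.[w] != 0 -> P.[w] = 0.
  move=> w Dw; have := Ha (w * 2 ^+ s); rewrite mulfK // HD => /(_ Dw) <-.
  rewrite /P !hornerM !horner_exp /S horner_sum -mulrA mulr_suml; apply: eq_bigr => k _.
  rewrite hornerZ /et_km /e_km mulfK // -HD /rq_at.
set d := Dq_at q w; set n := (Nq C q).[w].
  have dn0 : d != 0 by rewrite /d HD.
  have Hexp : d ^+ (2 ^ s) = d ^+ (A + m + 1).
    by rewrite /A -addnA addn1 subnK.
  rewrite Hexp -(@aux_pow C d n A m dn0) /c /N -/n; ring.
have P0 : P * Dp = 0.
  apply: poly_all_zero => w; rewrite hornerM.
  have [h|h] := eqVneq Dp.[w] 0; first by rewrite h mulr0.
  by rewrite HP // mul0r.
have S0 : S = 0.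
  move/eqP: P0; rewrite /P !mulf_eq0 !expf_eq0 (negbTE Nn0) (negbTE Dn0).
  by rewrite !andbF !orbF => /eqP.
move=> k hk; have := Hind (fun k => a k * c k) S0 k hk.
by move/eqP; rewrite mulf_eq0 (negbTE (cn0 k)) orbF => /eqP.
Qed.
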